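(* Let $p$ be a lattice norm on $\mathbb{R}^2$ with $p((1,0))=p((0,1))=1$, let $\Phi$ be an Orlicz function with $a(\Phi)>0$, and assume that either $\mu$ is non-atomic with $\mu(\Omega)=\infty$, or $\Omega=\mathbb{N}$, $\Sigma=2^{\mathbb{N}}$ and $\mu$ is the counting measure. Then $(L^\Phi(\mu),\|\cdot\|_{\Phi,p})$ is neither strictly monotone nor strictly convex.
   Context: $(\Omega,\Sigma,\mu)$ is a $\sigma$-finite complete measure space, $L^0$ the space of (classes of a.e. equal) real measurable functions, ordered pointwise a.e. An Orlicz function is a function $\Phi:\mathbb{R}\to[0,\infty)$ which is convex, even, vanishes at $0$ and is not identically zero; $a(\Phi)=\sup\{u\ge0:\Phi(u)=0\}$. $I_\Phi(x)=\int_\Omega\Phi(x(t))\,d\mu\in[0,+\infty]$; $L^\Phi(\mu)=\{x\in L^0: I_\Phi(\lambda x)<\infty\text{ for some }\lambda>0\}$. A lattice norm on $\mathbb{R}^2$ is a norm $p$ with $p((u,v))\le p((u',v'))$ whenever $|u|\le|u'|,|v|\le|v'|$; $\|x\|_{\Phi,p}=\inf_{k>0}\frac1k p((1,I_\Phi(kx)))$ with the convention $p((1,+\infty))=+\infty$. A normed lattice is strictly monotone if $0\le x\le y$, $x\ne y$ imply $\|x\|<\|y\|$; it is strictly convex if $\|x\|=\|y\|=1$, $x\neq y$ imply $\|(x+y)/2\|<1$. *)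

(* Defs.v *)
From HB Require Import structures.
From mathcomp Require Import all_boot all_order all_algebra.
From mathcomp Require Import all_classical all_reals all_analysis.
Set Implicit Arguments. Unset Strict Implicit. Unset Printing Implicit Defensive.
Import Order.TTheory GRing.Theory Num.Theory.
Local Open Scope classical_set_scope.
Local Open Scope ring_scope.

Definition lattice_norm (R : realType) (p : R * R -> R) : Prop :=
  [/\ (forall z, 0 <= p z),
      (forall z, p z = 0 -> z = (0, 0)),
      (forall a z, p (a * z.1, a * z.2) = `|a| * p z),
      (forall z w, p (z.1 + w.1, z.2 + w.2) <= p z + p w) &
      (forall u v u' v', `|u| <= `|u'| -> `|v| <= `|v'| -> p (u, v) <= p (u', v'))].

Definition orlicz (R : realType) (Phi : R -> R) : Prop :=
  [/\ (forall u, 0 <= Phi u),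
      (forall x y t, 0 <= t <= 1 ->
         Phi (t * x + (1 - t) * y) <= t * Phi x + (1 - t) * Phi y),
      (forall u, Phi (- u) = Phi u),
      Phi 0 = 0 &
      (exists u, Phi u != 0)].

Definition a_orlicz (R : realType) (Phi : R -> R) : \bar R :=
  ereal_sup [set (u%:E) | u in [set u : R | 0 <= u /\ Phi u = 0]].

Section orlicz_space.
Context {d : measure_display} {T : measurableType d} {R : realType}.
Variable mu : {measure set T -> \bar R}.

Definition I_Phi (Phi : R -> R) (x : T -> R) : \bar R :=
  (\int[mu]_(t in [set: T]) (Phi (x t))%:E)%E.

Definition in_LPhi (Phi : R -> R) (x : T -> R) : Prop :=
  measurable_fun [set: T] x /\
  exists lam : R, 0 < lam /\ (I_Phi Phi (fun t => (lam * x t)%R) < +oo)%E.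

Definition p_one (p : R * R -> R) (v : \bar R) : \bar R :=
  match v with
  | EFin r => (p (1, r))%:E
  | _ => +oo%E
  end.

Definition orlicz_norm (Phi : R -> R) (p : R * R -> R) (x : T -> R) : \bar R :=
  ereal_inf [set ((k^-1)%:E * p_one p (I_Phi Phi (fun t => (k * x t)%R)))%E
            | k in [set k : R | 0 < k]].

(* strict monotonicity of (L^Phi, ||.||_{Phi,p}); elements are a.e.-classes *)
Definition strictly_monotone (Phi : R -> R) (p : R * R -> R) : Prop :=
  forall x y : T -> R, in_LPhi Phi x -> in_LPhi Phi y ->
    {ae mu, forall t, 0 <= x t} -> {ae mu, forall t, x t <= y t} ->
    ~ {ae mu, forall t, x t = y t} ->
    (orlicz_norm Phi p x < orlicz_norm Phi p y)%E.

Definition strictly_convex (Phi : R -> R) (p : R * R -> R) : Prop :=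
  forall x y : T -> R, in_LPhi Phi x -> in_LPhi Phi y ->
    orlicz_norm Phi p x = 1%E -> orlicz_norm Phi p y = 1%E ->
    ~ {ae mu, forall t, x t = y t} ->
    (orlicz_norm Phi p (fun t => ((x t + y t) / 2)%R) < 1)%E.

Definition nonatomic : Prop :=
  forall A, measurable A -> (0 < mu A)%E ->
    exists B, [/\ measurable B, B `<=` A, (0 < mu B)%E & (mu B < mu A)%E].

End orlicz_space.

(* Main.v *)
Require Import Defs.
From HB Require Import structures.
From mathcomp Require Import all_boot all_order all_algebra.
From mathcomp Require Import all_classical all_reals all_analysis.
From mathcomp.algebra_tactics Require Import ring lra.
Import Order.TTheory GRing.Theory Num.Theory.
Import measurable_realfun.
Local Open Scope classical_set_scope.
Local Open Scope ring_scope.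

Lemma phi_zero_below (R : realType) (Phi : R -> R) : orlicz Phi ->
  forall u v, 0 <= v -> v <= u -> Phi u = 0 -> Phi v = 0.
Proof.
case=> Hge0 Hconv Heven H0 _ u v v0 vu Pu.
have [u0|u0] := eqVneq u 0.
  by have -> : v = 0 by apply/le_anti; rewrite v0 -u0 vu.
have up : 0 < u by rewrite lt_neqAle eq_sym u0 (le_trans v0 vu).
have t01 : 0 <= v / u <= 1.
  by apply/andP; split; [exact: divr_ge0 v0 (ltW up) | rewrite ler_pdivrMr // mul1r].
have := Hconv u 0 (v / u) t01.
rewrite Pu H0 !mulr0 addr0 mulrAC -mulrA divff ?mulr1 // => Hle.
by apply/le_anti; rewrite Hge0 andbT; move: Hle; rewrite addr0.
Qed.

Arguments phi_zero_below {R Phi}.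

Lemma a_real (R : realType) (Phi : R -> R) : orlicz Phi -> (0 < a_orlicz Phi)%E ->
  exists a : R, [/\ 0 < a,
    (forall k, 0 <= k -> k < a -> Phi k = 0) &
    (forall u, 0 <= u -> Phi u = 0 -> u <= a)].
Proof.
move=> HO Ha; have HO' := HO; case: HO' => Hge0 Hconv Heven H0 [u0 Hu0].
have Hub : (a_orlicz Phi <= `|u0|%:E)%E.
  apply: ge_ereal_sup => _ [u [u_ge0 Pu] <-]; rewrite lee_fin.
  rewrite leNgt; apply/negP => Hlt.
  have := phi_zero_below HO _ _ (normr_ge0 u0) (ltW Hlt) Pu.
  have -> : Phi `|u0| = Phi u0.
    by case: (ler0P u0) => h; rewrite ?Heven.
  by move/eqP; rewrite (negbTE Hu0).
have Hfin : a_orlicz Phi \is a fin_num.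
  by rewrite ge0_fin_numE ?(ltW Ha) // (le_lt_trans Hub) ?ltry.
exists (fine (a_orlicz Phi)); split.
- by rewrite -lte_fin fineK.
- move=> k k0 ka; have : (k%:E < a_orlicz Phi)%E by rewrite -(fineK Hfin) lte_fin.
  move/ereal_sup_gt => [_ [u [u_ge0 Pu] <-]]; rewrite lte_fin => ku.
  exact: (phi_zero_below HO _ _ k0 (ltW ku) Pu).
- move=> u u0' Pu; rewrite -lee_fin fineK //.
  by apply: ereal_sup_ubound; exists u.
Qed.
Section gen.
Context {d : measure_display} {T : measurableType d} {R : realType}.
Variable mu : {measure set T -> \bar R}.
Variable A : set T.
Hypothesis mA : measurable A.
Hypothesis muCA : mu (~` A) = +oo%E.

Definition zf (al c : R) : T -> R := fun t => if t \in A then al else c.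

Lemma zf_meas al c : measurable_fun [set: T] (zf al c).
Proof.
have -> : zf al c = (fun t => c + (al - c) * \1_A t).
  apply/funext => t; rewrite /zf indicE; case: (t \in A) => /=.
  - by rewrite mulr1 addrC subrK.
  - by rewrite mulr0 addr0.
apply: measurable_funD; first exact: measurable_cst.
apply: measurable_funM; first exact: measurable_cst.
exact: measurable_indic.
Qed.

Lemma I_zf (Phi : R -> R) (al c k : R) : orlicz Phi -> 0 <= al -> al <= c -> 0 < k ->
  I_Phi mu Phi (fun t => k * zf al c t) = if Phi (k * c) == 0 then 0%E else +oo%E.
Proof.
move=> HO al0 alc k0; have HO' := HO; case: HO' => Hge0 _ _ _ _.
rewrite /I_Phi; case: eqP => Pkc.
  apply: integral0_eq => t _; congr EFin.
  apply: (phi_zero_below HO _ _ _ _ Pkc).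
    by rewrite /zf; case: (t \in A); apply: mulr_ge0; rewrite ?(ltW k0) ?(le_trans al0 alc).
  by rewrite /zf; case: (t \in A) => //; rewrite ler_pM2l.
apply/eqP; rewrite eq_le leey /=.
have mCA : measurable (~` A) by exact: measurableC.
have Hmf : measurable_fun [set: T] (fun t => (Phi (k * zf al c t))%:E).
  have -> : (fun t => (Phi (k * zf al c t))%:E) = EFin \o zf (Phi (k * al)) (Phi (k * c)).
    by apply/funext => t; rewrite /zf /=; case: (t \in A).
  by apply/measurable_EFinP; exact: zf_meas.
have := ge0_subset_integral mu mCA measurableT Hmf (fun t _ => Hge0 _) (@subsetT _ _).
rewrite (@eq_integral _ _ _ mu (~` A) (cst (Phi (k * c))%:E)); last first.
  move=> t; rewrite inE /= => tA; rewrite /zf.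
  by have -> : (t \in A) = false by apply/negbTE/negP; rewrite inE.
rewrite integral_cst // muCA gt0_muley //; last first.
by rewrite lte_fin lt_neqAle eq_sym Hge0 andbT; apply/eqP.
Qed.

Lemma norm_zf (Phi : R -> R) (p : R * R -> R) (a al : R) : orlicz Phi -> p (1, 0) = 1 ->
  0 < a -> (forall k, 0 <= k -> k < a -> Phi k = 0) ->
  (forall u, 0 <= u -> Phi u = 0 -> u <= a) -> 0 <= al -> al <= a ->
  orlicz_norm mu Phi p (zf al a) = 1%E.
Proof.
move=> HO p10 a0 Hbelow Hub al0 ala.
rewrite /orlicz_norm; apply/le_anti/andP; split.
- apply/lee_addgt0Pr => e e0.
  have e1 : 0 < 1 + e by rewrite addr_gt0.
  have k0 : 0 < (1 + e)^-1 by rewrite invr_gt0.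
  pose k := (1 + e)^-1.
  have -> : (1%E + e%:E = (k^-1)%:E *
       p_one p (I_Phi mu Phi (fun t => (k * zf al a t)%R)))%E.
    rewrite I_zf // Hbelow ?eqxx /=; first by rewrite p10 mule1 invrK.
    - by rewrite mulr_ge0 ?ltW.
    - by rewrite ltr_pdivrMl // ltr_pMl // ltrDl.
  by apply: ereal_inf_lbound; exists k.
- apply: le_ereal_inf_tmp => _ [k k0 <-]; rewrite I_zf //.
  case: eqP => P /=.
  + have k1 : k <= 1.
      by rewrite -(ler_pM2r a0) mul1r Hub // mulr_ge0 ?ltW.
    by rewrite p10 mule1 lee_fin invf_ge1.
  + by rewrite gt0_muley ?leey // lte_fin invr_gt0.
Qed.

End gen.

Lemma main_gen {d : measure_display} {T : measurableType d} {R : realType}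
  (mu : {measure set T -> \bar R}) (A : set T) (p : R * R -> R) (Phi : R -> R) :
  measurable A -> (0 < mu A)%E -> mu (~` A) = +oo%E -> p (1, 0) = 1 ->
  orlicz Phi -> (0 < a_orlicz Phi)%E ->
  ~ strictly_monotone mu Phi p /\ ~ strictly_convex mu Phi p.
Proof.
move=> mA muA muCA p10 HO Ha.
have [a [a0 Hbelow Hub]] := @a_real _ _ HO Ha.
pose x := zf A (a / 2) a; pose y := zf A a a.
have nx : orlicz_norm mu Phi p x = 1%E by apply: norm_zf => //; lra.
have ny : orlicz_norm mu Phi p y = 1%E by apply: norm_zf => //; lra.
have inL al : 0 <= al -> al <= a -> in_LPhi mu Phi (zf A al a).
  move=> al0 ala; split; first exact: zf_meas.
  exists (1 / 2); split; first lra.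
  rewrite I_zf // ?Hbelow ?eqxx ?ltry //; lra.
have Lx : in_LPhi mu Phi x by apply: inL; lra.
have Ly : in_LPhi mu Phi y by apply: inL; lra.
have notae : ~ {ae mu, forall t, x t = y t}.
  move=> [N [mN muN sub]].
  have AN : A `<=` N.
    move=> t tA; apply: sub => /=; rewrite /x /y /zf.
    rewrite (mem_set tA).
    lra.
  have := le_measure mu (mem_set mA) (mem_set mN) AN.
  move=> H; suff : (mu A <= 0)%E by rewrite leNgt muA.
  by rewrite -muN.
split.
- move=> H; have := H x y Lx Ly.
  have Hx : {ae mu, forall t, 0 <= x t}.
    by apply: aeW => t; rewrite /x /zf; case: (t \in A); lra.
  have Hxy : {ae mu, forall t, x t <= y t}.
    by apply: aeW => t; rewrite /x /y /zf; case: (t \in A); lra.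
  by move/(_ Hx Hxy notae); rewrite nx ny ltxx.
- move=> H; have := H x y Lx Ly nx ny notae.
  have -> : (fun t => (x t + y t) / 2) = zf A ((a / 2 + a) / 2) a.
    by apply/funext => t; rewrite /x /y /zf; case: (t \in A) => //; field.
  by rewrite norm_zf // ?ltxx //; lra.
Qed.

Lemma count0 (R : realType) : (0 < @counting nat R [set 0%N])%E.
Proof.
rewrite /counting; case: asboolP => [_|H]; last by exfalso; apply: H; exact: finite_set1.
rewrite fset_set1 lte_fin.
have -> : size (finmap.enum_fset (finmap.fset1 0%N)) = 1%N by apply: finmap.cardfs1.
by rewrite ltr01.
Qed.

Lemma countC0 (R : realType) : @counting nat R (~` [set 0%N]) = +oo%E.
Proof.
rewrite /counting; case: asboolP => // fin.
exfalso; apply: infinite_nat; rewrite -(setUv [set 0%N]) finite_setU; split => //.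
Qed.

Theorem corollary2 :
  (* case 1: mu sigma-finite, complete, non-atomic, mu(Omega) = oo *)
  (forall (R : realType) (p : R * R -> R) (Phi : R -> R)
     (d : measure_display) (T : measurableType d)
     (mu : {measure set T -> \bar R}),
     lattice_norm p -> p (1, 0) = 1 -> p (0, 1) = 1 ->
     orlicz Phi -> (0 < a_orlicz Phi)%E ->
     sigma_finite [set: T] mu -> measure_is_complete mu ->
     nonatomic mu -> mu [set: T] = +oo%E ->
     ~ strictly_monotone mu Phi p /\ ~ strictly_convex mu Phi p)
  /\
  (* case 2: Omega = N, Sigma = 2^N, mu = counting measure *)
  (forall (R : realType) (p : R * R -> R) (Phi : R -> R),
     lattice_norm p -> p (1, 0) = 1 -> p (0, 1) = 1 ->
     orlicz Phi -> (0 < a_orlicz Phi)%E ->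
     ~ strictly_monotone (@counting nat R) Phi p /\
     ~ strictly_convex (@counting nat R) Phi p).
Proof.
split.
- move=> R p Phi d T mu _ p10 _ HO Ha _ _ nonat muT.
  have muT0 : (0 < mu [set: T])%E by rewrite muT ltry.
  have [B [mB _ muB muBT]] := nonat [set: T] measurableT muT0.
  apply: (@main_gen d T R mu B p Phi mB muB _ p10 HO Ha).
  have finB : mu B \is a fin_num.
    by rewrite ge0_fin_numE ?measure_ge0 // (lt_le_trans muBT (leey _)).
  have h := measureU mu mB (measurableC mB) (setICr B).
  rewrite setUv in h.
  have : (mu B + mu (~` B) = +oo)%E by rewrite -h; exact: muT.
  rewrite -(fineK finB).
  case: (mu (~` B)) => [r| |] //=.
- move=> R p Phi _ p10 _ HO Ha.
  apply: (@main_gen _ _ _ (@counting nat R) [set 0%N]) => //.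
  + exact: count0.
  + exact: countC0.
Qed.
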